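(* Let $n\geq 2$ and let $H$ be a complex Hadamard matrix of order $n$ with rows $h_1,\dots,h_n$ (each $h_i$ a $1\times n$ row vector). Let $K$ be the $n^2\times n^2$ block matrix whose $(i,j)$-th block (of size $n\times n$) is $h_j^{\ast}h_i$, for $1\le i,j\le n$. Then $Q:=K-I_{n^2}$ is a Seidel matrix associated to an $\left(n^{2},\frac{n(n+1)}{2}\right)$ complex equiangular tight frame.
   Context: A complex Hadamard matrix of order $n$ is an $n\times n$ complex matrix $H$ whose entries all have modulus $1$ and which satisfies $HH^{\ast}=nI_n$, where $^\ast$ denotes conjugate transpose. An $(N,k)$ frame is a Parseval frame of $N$ vectors $f_1,\dots,f_N$ in $\mathbb{C}^k$ (usual inner product), i.e. $\sum_{i=1}^N|\langle x,f_i\rangle|^2=\|x\|^2$ for all $x\in\mathbb{C}^k$; its analysis operator $V$ is the $N\times k$ matrix with $(Vx)_j=\langle x,f_j\rangle$. An $(N,k)$ complex equiangular tight frame (CETF) is an $(N,k)$ frame that is uniform ($\|f_i\|$ constant) and equiangular ($|\langle f_i,f_j\rangle|$ constant for $i\neq j$); for such a frame $VV^{\ast}=\frac{k}{N}I_N+\sqrt{\frac{k(N-k)}{N^2(N-1)}}\,Q$ where $Q$ is a self-adjoint matrix with zero diagonal and all off-diagonal entries of modulus $1$; $Q$ is called the Seidel matrix associated with the frame. *)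

(* Defs.v *)
(* Complex numbers: an arbitrary numClosedFieldType C
   (MathComp's abstraction of the complex field: algebraically closed,
   with conjugation, norm and order; algC is one instance). *)
From mathcomp Require Import all_boot all_order all_algebra.
Set Implicit Arguments. Unset Strict Implicit. Unset Printing Implicit Defensive.
Import Order.TTheory GRing.Theory Num.Theory.
Local Open Scope ring_scope.

Section Defs.
Variable C : numClosedFieldType.

Definition ctr m n (A : 'M[C]_(m, n)) : 'M[C]_(n, m) := (map_mx Num.conj A)^T.

Definition complex_hadamard n (H : 'M[C]_n) : Prop :=
  (forall i j, `|H i j| = 1) /\ H *m ctr H = (n%:R)%:M.

(* usual inner product on C^k (linear in the first argument) and norm *)
Definition cdot k (x y : 'rV[C]_k) : C := \sum_(l < k) x 0 l * (y 0 l)^*.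
Definition vnorm k (x : 'rV[C]_k) : C := sqrtC (cdot x x).

Definition parseval_frame N k (f : 'I_N -> 'rV[C]_k) : Prop :=
  forall x : 'rV[C]_k, \sum_(i < N) `|cdot x (f i)| ^+ 2 = vnorm x ^+ 2.

Definition uniform_frame N k (f : 'I_N -> 'rV[C]_k) : Prop :=
  forall i j, vnorm (f i) = vnorm (f j).

Definition equiangular_frame N k (f : 'I_N -> 'rV[C]_k) : Prop :=
  exists c : C, forall i j, i != j -> `|cdot (f i) (f j)| = c.

Definition CETF N k (f : 'I_N -> 'rV[C]_k) : Prop :=
  [/\ parseval_frame f, uniform_frame f & equiangular_frame f].

(* analysis operator: (V x)_j = <x, f_j> *)
Definition analysis_op N k (f : 'I_N -> 'rV[C]_k) : 'M[C]_(N, k) :=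
  \matrix_(j, l) (f j 0 l)^*.

Definition seidel_of N k (f : 'I_N -> 'rV[C]_k) (Q : 'M[C]_N) : Prop :=
  [/\ ctr Q = Q,
      (forall i, Q i i = 0),
      (forall i j, i != j -> `|Q i j| = 1) &
      analysis_op f *m ctr (analysis_op f) =
        (k%:R / N%:R)%:M
        + sqrtC ((k%:R * (N%:R - k%:R)) / (N%:R ^+ 2 * (N%:R - 1))) *: Q].

Definition seidel_of_CETF N k (Q : 'M[C]_N) : Prop :=
  exists f : 'I_N -> 'rV[C]_k, CETF f /\ seidel_of f Q.

(* block indices: a = i*n + p  with i = blk a, p = inblk a *)
Lemma blk_proof n (a : 'I_(n * n)) : (a %/ n < n)%N.
Proof.
case: n a => [|n] a; first by case: a.
by rewrite ltn_divLR // ltn_ord.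
Qed.

Lemma inblk_proof n (a : 'I_(n * n)) : (a %% n < n)%N.
Proof.
case: n a => [|n] a; first by case: a.
by rewrite ltn_mod.
Qed.

Definition blk n (a : 'I_(n * n)) : 'I_n := Ordinal (blk_proof a).
Definition inblk n (a : 'I_(n * n)) : 'I_n := Ordinal (inblk_proof a).

(* K: n^2 x n^2 block matrix whose (i,j) block is h_j^* h_i,
   h_i = row i H; entry (p,q) of that block is conj(H j p) * H i q *)
Definition Kmx n (H : 'M[C]_n) : 'M[C]_(n * n) :=
  \matrix_(a, b) (ctr (row (blk b) H) *m row (blk a) H) (inblk a) (inblk b).

End Defs.
Arguments seidel_of_CETF {C} N k Q.

(* Main.v *)
Require Import Defs.
From mathcomp Require Import all_boot all_order all_algebra.
From mathcomp Require Import ring lra zify.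
Set Implicit Arguments. Unset Strict Implicit. Unset Printing Implicit Defensive.
Import Order.TTheory GRing.Theory Num.Theory.
Local Open Scope ring_scope.

Section Aux.
Variable C : numClosedFieldType.

Lemma ctrE m n (A : 'M[C]_(m, n)) i j : ctr A i j = (A j i)^*.
Proof. by rewrite /ctr !mxE. Qed.

Lemma ctrK m n (A : 'M[C]_(m, n)) : ctr (ctr A) = A.
Proof. by apply/matrixP=> i j; rewrite !ctrE conjCK. Qed.

Lemma ctrM m n p (A : 'M[C]_(m, n)) (B : 'M[C]_(n, p)) :
  ctr (A *m B) = ctr B *m ctr A.
Proof.
apply/matrixP=> i j; rewrite ctrE !mxE rmorph_sum; apply: eq_bigr => l _.
by rewrite !ctrE rmorphM mulrC.
Qed.

Lemma ctrD m n (A B : 'M[C]_(m, n)) : ctr (A + B) = ctr A + ctr B.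
Proof. by apply/matrixP=> i j; rewrite /ctr !mxE rmorphD. Qed.

Lemma ctrZ m n a (A : 'M[C]_(m, n)) : ctr (a *: A) = a^* *: ctr A.
Proof. by apply/matrixP=> i j; rewrite /ctr !mxE rmorphM. Qed.

Lemma ctr_scalar n a : ctr (a%:M : 'M[C]_n) = (a^*)%:M.
Proof.
apply/matrixP=> i j; rewrite /ctr !mxE eq_sym.
by rewrite rmorphMn.
Qed.

Lemma frame_of N r (B : 'M[C]_(r, N)) (G : 'M[C]_N) :
  B *m ctr B = 1%:M -> ctr B *m B = G ->
  exists f : 'I_N -> 'rV[C]_r,
    [/\ parseval_frame f, analysis_op f = ctr B &
        forall i j, cdot (f i) (f j) = G j i].
Proof.
move=> hBB hG.
exists (fun j => \row_l B l j).
have hA : analysis_op (fun j => \row_l B l j) = ctr B.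
  by apply/matrixP=> i j; rewrite /ctr !mxE.
split=> //; last first.
  move=> i j; rewrite -hG /ctr mxE /cdot; apply: eq_bigr => l _.
  by rewrite !mxE mulrC.
move=> x.
have hy : forall i, cdot x (\row_l B l i) = (x *m map_mx Num.conj B) 0 i.
  by move=> i; rewrite /cdot !mxE; apply: eq_bigr => l _; rewrite !mxE.
under eq_bigr do rewrite hy normCK.
rewrite /vnorm sqrtCK.
set y := x *m map_mx Num.conj B.
have -> : \sum_(i < N) y 0 i * (y 0 i)^* = (y *m ctr y) 0 0.
  by rewrite /ctr mxE; apply: eq_bigr => i _; rewrite !mxE.
have hc : map_mx Num.conj B *m ctr (map_mx Num.conj B) = 1%:M.
  have := congr1 (map_mx Num.conj) hBB.
  rewrite map_mxM /= map_scalar_mx rmorph1 => <-; congr (_ *m _).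
  by apply/matrixP=> i j; rewrite !mxE.
rewrite /y ctrM mulmxA -(mulmxA x) hc mulmx1 mxE /cdot.
by apply: eq_bigr => l _; rewrite /ctr !mxE.
Qed.
End Aux.


Lemma dim_fix (C : numClosedFieldType) N k r (B : 'M[C]_(r, N)) (G : 'M[C]_N) :
  B *m ctr B = 1%:M -> ctr B *m B = G -> \tr G = k%:R ->
  exists B : 'M[C]_(k, N), B *m ctr B = 1%:M /\ ctr B *m B = G.
Proof.
move=> hu hG htr.
have hr : r = k.
  apply/eqP; rewrite -(eqr_nat C) -htr -hG mxtrace_mulC hu mxtrace1 //.
by subst r; exists B.
Qed.

Lemma proj_decomp (C : numClosedFieldType) N k (G : 'M[C]_N) :
  ctr G = G -> G *m G = G -> \tr G = k%:R ->
  exists B : 'M[C]_(k, N), B *m ctr B = 1%:M /\ ctr B *m B = G.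
Proof.
move=> hH hP htr.
set B := schmidt (row_base G).
have hu : B *m ctr B = 1%:M.
  have := schmidt_unitarymx (row_base G) (rank_leq_col G).
  rewrite qualifE => /eqP <-; congr (_ *m _).
  by apply/matrixP=> i j; rewrite /ctr !mxE.
have eqB : (B :=: G)%MS.
  by rewrite /B; apply: eqmx_trans (eqmx_schmidt_free (row_base_free G)) (eq_row_base G).
have hGB : G *m ctr B *m B = G.
  have s1 : (G <= B)%MS by rewrite eqB.
  have hX := mulmxKpV s1.
  have := congr1 (fun M => M *m ctr B *m B) hX => /= e.
  by rewrite -e -(mulmxA _ B) hu mulmx1 hX.
have hBG : B *m G = B.
  have s2 : (B <= G)%MS by rewrite eqB.
  have hX := mulmxKpV s2.
  by rewrite -[in LHS]hX -(mulmxA (B *m pinvmx G)) hP hX.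
have hGB2 : G *m ctr B = ctr B.
  by have := congr1 (@ctr _ _ _) hBG; rewrite ctrM hH.
have hG : ctr B *m B = G by rewrite -[RHS]hGB hGB2.
exact: dim_fix hu hG htr.
Qed.


Lemma idx_proof n (j q : 'I_n) : (j * n + q < n * n)%N.
Proof. have := ltn_ord j; have := ltn_ord q; nia. Qed.

Definition idx n (j q : 'I_n) : 'I_(n * n) := Ordinal (idx_proof j q).

Lemma blk_idx n (j q : 'I_n) : blk (idx j q) = j.
Proof.
apply/val_inj => /=; have hq := ltn_ord q.
by rewrite divnMDl ?(divn_small hq) ?addn0 //; apply: leq_ltn_trans hq.
Qed.

Lemma inblk_idx n (j q : 'I_n) : inblk (idx j q) = q.
Proof. by apply/val_inj => /=; rewrite modnMDl modn_small. Qed.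

Lemma idx_blk n (a : 'I_(n * n)) : idx (blk a) (inblk a) = a.
Proof. by apply/val_inj => /=; rewrite -divn_eq. Qed.

Lemma sum_idx (R : nmodType) n (F : 'I_(n * n) -> R) :
  \sum_(b < n * n) F b = \sum_(j < n) \sum_(q < n) F (idx j q).
Proof.
rewrite pair_big /= (reindex (fun p : 'I_n * 'I_n => idx p.1 p.2)) //=.
exists (fun b => (blk b, inblk b)) => [[j q] _|b _] /=.
  by rewrite blk_idx inblk_idx.
exact: idx_blk.
Qed.


Section K.
Variables (C : numClosedFieldType) (n : nat) (H : 'M[C]_n).

Lemma KE a b : Kmx H a b = (H (blk b) (inblk a))^* * H (blk a) (inblk b).
Proof. by rewrite /Kmx /ctr !mxE big_ord1 !mxE. Qed.

Lemma ctr_K : ctr (Kmx H) = Kmx H.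
Proof.
by apply/matrixP=> a b; rewrite /ctr mxE mxE -/(Kmx H) !KE rmorphM /= conjCK mulrC.
Qed.

Hypothesis hH : complex_hadamard H.

Lemma K_diag a : Kmx H a a = 1.
Proof. by rewrite KE mulrC -normCK hH.1 expr1n. Qed.

Lemma K_norm a b : `|Kmx H a b| = 1.
Proof. by rewrite KE normrM norm_conjC !hH.1 mulr1. Qed.

Lemma HtH : ctr H *m H = (n%:R)%:M.
Proof.
case: (posnP n) => [n0|npos].
  by subst n; apply/matrixP=> [[]].
have hn : (n%:R : C) != 0 by rewrite pnatr_eq0 -lt0n.
have h1 : H *m ((n%:R)^-1 *: ctr H) = 1%:M.
  by rewrite -scalemxAr hH.2 scale_scalar_mx mulVf.
move: (mulmx1C h1); rewrite -scalemxAl => /(congr1 (fun M => n%:R *: M)).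
by rewrite scalerA divff // scale1r scale_scalar_mx mulr1.
Qed.

Lemma KK : Kmx H *m Kmx H = ((n%:R) ^+ 2)%:M.
Proof.
apply/matrixP=> a c; rewrite mxE sum_idx.
have e : forall j q, Kmx H a (idx j q) * Kmx H (idx j q) c =
   ((H j (inblk a))^* * H j (inblk c)) * (H (blk a) q * (H (blk c) q)^*).
  by move=> j q; rewrite !KE blk_idx inblk_idx; ring.
under eq_bigr do under eq_bigr do rewrite e.
under eq_bigr do rewrite -mulr_sumr.
rewrite -mulr_suml.
have e1 : \sum_(q < n) H (blk a) q * (H (blk c) q)^* = (H *m ctr H) (blk a) (blk c).
  by rewrite mxE; apply: eq_bigr => q _; rewrite /ctr !mxE.
have e2 : \sum_(j < n) (H j (inblk a))^* * H j (inblk c) = (ctr H *m H) (inblk a) (inblk c).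
  by rewrite mxE; apply: eq_bigr => q _; rewrite /ctr !mxE.
rewrite e1 e2 hH.2 HtH !mxE.
have -> : (a == c) = (blk a == blk c) && (inblk a == inblk c).
  apply/eqP/andP => [->//|[/eqP e3 /eqP e4]].
  by rewrite -(idx_blk a) -(idx_blk c) e3 e4.
by case: eqP; case: eqP; rewrite /= ?mulr0n ?mulr1n ?mulr0 ?mul0r // expr2.
Qed.
End K.


Lemma QE (C : numClosedFieldType) n (H : 'M[C]_n) a b :
  (Kmx H - 1%:M) a b = Kmx H a b - (a == b)%:R.
Proof. by rewrite KE !mxE ?big_ord1 ?mxE. Qed.

Lemma ctrN (C : numClosedFieldType) m n (A : 'M[C]_(m, n)) : ctr (- A) = - ctr A.
Proof. by apply/matrixP=> i j; rewrite /ctr !mxE rmorphN. Qed.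

Lemma half_even n : (2 %| n * (n + 1))%N.
Proof. rewrite dvdn2 oddM addn1 /=; by case: (odd n). Qed.

Theorem lemma1 (C : numClosedFieldType) (n : nat) (H : 'M[C]_n) :
  (2 <= n)%N -> complex_hadamard H ->
  seidel_of_CETF (n * n)%N (n * (n + 1) %/ 2)%N (Kmx H - 1%:M).
Proof.
move=> n2 hH.
set N := (n * n)%N; set k := (n * (n + 1) %/ 2)%N.
set x : C := n%:R.
have hx0 : x != 0 by rewrite pnatr_eq0; case: n n2 {x N k H hH}.
have hxpos : 0 < x by rewrite ltr0n; case: n n2 {x N k H hH hx0}.
have hx1 : x * x - 1 != 0.
  rewrite -natrM -(natrB _ (_ : 1 <= n * n)%N); last by nia.
  by rewrite pnatr_eq0; nia.
have hk : (k%:R : C) = x * (x + 1) / 2.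
  apply: (canRL (mulfK _)); first by rewrite pnatr_eq0.
  by rewrite -natrM divnK ?half_even // natrM natrD.
have hN : (N%:R : C) = x * x by rewrite natrM.
set Q := Kmx H - 1%:M.
pose s : C := k%:R / N%:R.
pose c : C := sqrtC ((k%:R * (N%:R - k%:R)) / (N%:R ^+ 2 * (N%:R - 1))).
have hs : s = (x + 1) / (2 * x) by rewrite /s hk hN; field; rewrite hx0.
have hc : c = (2 * x)^-1.
  rewrite /c hk hN.
  have -> : x * (x + 1) / 2 * (x * x - x * (x + 1) / 2) / ((x * x) ^+ 2 * (x * x - 1))
     = ((2 * x)^-1) ^+ 2 by field; rewrite hx0 hx1.
  by rewrite sqrCK // invr_ge0 mulr_ge0 // ltW.
have hc0 : 0 <= c by rewrite hc invr_ge0 mulr_ge0 // ltW.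
have hsc : s - c = 2^-1 by rewrite hs hc; field; rewrite hx0.
pose G : 'M[C]_N := s%:M + c *: Q.
have hG : G = (2^-1)%:M + c *: Kmx H.
  by rewrite /G /Q scalerBr scale_scalar_mx mulr1 addrCA addrC -hsc raddfB /=.
have h2 : (0 : C) <= 2^-1 by rewrite invr_ge0 ler0n.
have hGh : ctr G = G.
  by rewrite hG ctrD ctr_scalar ctrZ ctr_K !geC0_conj.
have hGG : G *m G = G.
  rewrite hG mulmxDl !mulmxDr !mul_scalar_mx -!scalemxAl -!scalemxAr KK //.
 
  rewrite mul_mx_scalar !scalerA !scale_scalar_mx [X in _ + X]addrC addrACA.
  rewrite -scalerDl -raddfD /=; congr (_%:M + _ *: _); rewrite hc -/x; field; by rewrite hx0.
have hGe : forall a b, G a b = s * (a == b)%:R + c * Q a b.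
  by move=> a b; rewrite /G mxE [s%:M a b]mxE [(c *: Q) a b]mxE mulr_natr.
have hQd : forall a, Q a a = 0 by move=> a; rewrite /Q QE K_diag // eqxx subrr.
have htr : \tr G = k%:R.
  rewrite /mxtrace.
  under eq_bigr do rewrite hGe hQd eqxx mulr0 addr0 mulr1.
  rewrite sumr_const card_ord /s -(mulr_natr (k%:R / N%:R)) divfK //.
  by rewrite hN mulf_neq0.
have [B [hB1 hB2]] := proj_decomp hGh hGG htr.
have [f [hpf hA hcd]] := frame_of hB1 hB2.
exists f; split.
  split => //.
    by move=> i j; rewrite /vnorm !hcd !hGe !hQd !eqxx.
  exists c => i j hij; rewrite hcd hGe /Q QE eq_sym (negbTE hij) mulr0 add0r subr0.
  by rewrite normrM K_norm // mulr1 ger0_norm.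
split.
- by rewrite /Q ctrD ctrN ctr_K ctr_scalar rmorph1.
- exact: hQd.
- by move=> a b hab; rewrite /Q QE (negbTE hab) subr0 K_norm.
- by rewrite hA ctrK hB2.
Qed.
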